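(* Let $C$ be a convex subset of a real topological vector space $X$. Call two faces $F,G$ of $C$ closure-equivalent if $\overline F=\overline G$, and for each closure-equivalence class $\mathcal K$ of faces of $C$ let $U_{\mathcal K}=\bigcup_{F\in\mathcal K}\operatorname{fri} F$. Then $C=\bigcup_{\mathcal K}U_{\mathcal K}$, the union being over all closure-equivalence classes, and $U_{\mathcal K}\cap U_{\mathcal K'}=\emptyset$ whenever $\mathcal K\neq\mathcal K'$.
   Context: For a convex set $C$, a convex subset $F\subseteq C$ is a face of $C$ if for every $x\in F$ and all $y,z\in C$ with $x\in(y,z)=\{(1-t)y+tz:t\in(0,1)\}$ we have $y,z\in F$; $F_{\min}(x,C)$ is the intersection of all faces of $C$ containing $x\in C$. The face relative interior of a convex set $D$ is $\operatorname{fri} D=\{x\in D: D\subseteq\overline{F_{\min}(x,D)}\}$. *)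

(* Defs.v *)
From HB Require Import structures.
From mathcomp Require Import all_boot all_order all_algebra.
From mathcomp Require Import all_classical all_reals all_analysis.
Set Implicit Arguments. Unset Strict Implicit. Unset Printing Implicit Defensive.
Import Order.TTheory GRing.Theory Num.Theory.
Local Open Scope classical_set_scope.
Local Open Scope ring_scope.

Section Faces.
Context {R : realType} {X : lmodType R}.

Definition oseg (y z : X) : set X :=
  [set x | exists t : R, 0 < t < 1 /\ x = (1 - t) *: y + t *: z].

Definition is_face (C F : set X) : Prop :=
  [/\ convex.convex_set (F : set (convex_lmodType X)), F `<=` C &
      forall x y z, F x -> C y -> C z -> oseg y z x -> F y /\ F z].

Definition Fmin (x : X) (C : set X) : set X :=
  \bigcap_(F in [set F | is_face C F /\ F x]) F.

End Faces.

Definition fri {R : realType} {X : topologicalLmodType R} (D : set X) : set X :=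
  [set x | D x /\ D `<=` closure (Fmin x D)].

Definition cl_class {R : realType} {X : topologicalLmodType R} (C F : set X)
  : set (set X) :=
  [set G | is_face C G /\ closure G = closure F].

Definition cl_classes {R : realType} {X : topologicalLmodType R} (C : set X)
  : set (set (set X)) :=
  [set K | exists F, is_face C F /\ K = cl_class C F].

Definition U_class {R : realType} {X : topologicalLmodType R} (K : set (set X))
  : set X :=
  \bigcup_(F in K) fri F.

(* Main.v *)
Require Import Defs.
From HB Require Import structures.
From mathcomp Require Import all_boot all_order all_algebra.
From mathcomp Require Import all_classical all_reals all_analysis.
Local Open Scope classical_set_scope.

Section Aux.
Context {R : realType} {X : lmodType R}.

Lemma convI (A B : set X) :
  convex.convex_set (A : set (convex_lmodType X)) ->
  convex.convex_set (B : set (convex_lmodType X)) ->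
  convex.convex_set ((A `&` B) : set (convex_lmodType X)).
Proof.
move=> cA cB x y l; rewrite !in_setE => -[xA xB] [yA yB].
split; rewrite -in_setE; [apply: cA|apply: cB]; by rewrite in_setE.
Qed.

Lemma face_self (C : set X) :
  convex.convex_set (C : set (convex_lmodType X)) -> is_face C C.
Proof. by move=> cC; split => // x y z _ Cy Cz _. Qed.

Lemma face_trans (C F G : set X) : is_face C F -> is_face F G -> is_face C G.
Proof.
move=> [cF FC fF] [cG GF fG]; split => //.
  by move=> x /GF /FC.
move=> x y z Gx Cy Cz s.
have [Fy Fz] := fF x y z (GF _ Gx) Cy Cz s.
exact: (fG x y z Gx Fy Fz s).
Qed.

Lemma face_inter (C F H : set X) : is_face C F -> is_face C H ->
  is_face F (H `&` F).
Proof.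
move=> [cF FC fF] [cH HC fH]; split.
- exact: convI.
- by move=> x [].
move=> x y z [Hx Fx] Fy Fz s.
have [Hy Hz] := fH x y z Hx (FC _ Fy) (FC _ Fz) s.
by [].
Qed.

Lemma Fmin_sub (x : X) (C F : set X) : is_face C F -> F x -> Fmin x C `<=` F.
Proof. by move=> fF Fx y; apply; split. Qed.

Lemma Fmin_x (x : X) (C : set X) : Fmin x C x.
Proof. by move=> F [_]. Qed.

Lemma Fmin_face (x : X) (C : set X) :
  convex.convex_set (C : set (convex_lmodType X)) -> C x -> is_face C (Fmin x C).
Proof.
move=> cC Cx; split.
- move=> a b l; rewrite !in_setE => Ha Hb F [fF Fx].
  have Fa := Ha F (conj fF Fx); have Fb := Hb F (conj fF Fx).
  case: fF => cF _ _; rewrite -in_setE; apply: cF; by rewrite in_setE.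
- by apply: Fmin_sub => //; exact: face_self.
- move=> a y z Ha Cy Cz s; split => F [fF Fx].
  + by have [] := (let: And3 _ _ f := fF in f) a y z (Ha F (conj fF Fx)) Cy Cz s.
  + by have [] := (let: And3 _ _ f := fF in f) a y z (Ha F (conj fF Fx)) Cy Cz s.
Qed.

Lemma Fmin_face_sub (x : X) (C F : set X) : is_face C F -> F x ->
  Fmin x F `<=` Fmin x C.
Proof.
move=> fF Fx y Hy H [fH Hx].
have : (H `&` F) y by apply: Hy; split; [exact: face_inter _ _ _ fF fH | by split].
by case.
Qed.

Lemma Fmin_of_min (x : X) (C : set X) :
  convex.convex_set (C : set (convex_lmodType X)) -> C x ->
  Fmin x C `<=` Fmin x (Fmin x C).
Proof.
move=> cC Cx y Hy G [fG Gx].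
have fG' := face_trans _ _ _ (Fmin_face x C cC Cx) fG.
exact: (Fmin_sub _ _ _ fG' Gx).
Qed.

End Aux.

Theorem theorem5p3 (R : realType) (X : topologicalLmodType R) (C : set X) :
  convex.convex_set (C : set (convex_lmodType X)) ->
  C = \bigcup_(K in cl_classes C) U_class K /\
  (forall K K', cl_classes C K -> cl_classes C K' -> K <> K' ->
     U_class K `&` U_class K' = set0).
Proof.
move=> cC; split.
  apply/seteqP; split.
    move=> x Cx; exists (cl_class C (Fmin x C)).
      by exists (Fmin x C); split => //; exact: Fmin_face.
    exists (Fmin x C).
      by split => //; exact: Fmin_face.
    split; first exact: Fmin_x.
    move=> y Hy; apply: subset_closure; exact: Fmin_of_min.
  move=> x [K [F [fF ->]] [G [fG _] [Gx _]]].
  by case: fG => _ GC _; exact: GC.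
have key : forall (F : set X) x, is_face C F -> fri F x ->
    closure F = closure (Fmin x C).
  move=> F x fF [Fx sub]; apply/seteqP; split.
    have cl := (closure_id (closure (Fmin x C))).1 (@closed_closure _ (Fmin x C)).
    have sF : F `<=` closure (Fmin x C).
      move=> y /sub; apply: closureS; exact: Fmin_face_sub.
    move=> y Fy.
    have H : closure (closure (Fmin x C)) y := closureS sF Fy.
    exact: (eq_ind_r (fun S => S y) H cl).
  apply: closureS; exact: Fmin_sub.
move=> K K' [F0 [fF0 ->]] [G0 [fG0 ->]] neq.
apply/seteqP; split => // x [[F [fF eF] xF] [G [fG eG] xG]].
apply: neq; rewrite /cl_class -eF -eG (key F x) // (key G x) //.
Qed.
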